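(* Let $\mathbb F$ be a field. The $\mathsf p$-family $(\mathrm{HC}^2)=(\mathrm{HC}_n^2)_{n\in\mathbb N}$ does not lie in $\mathrm{VNPC}(\trianglelefteq_{\mathsf p})$, i.e. $(\mathrm{HC})\not\trianglelefteq_{\mathsf p}(\mathrm{HC}^2)$.
   Context: $\varepsilon$ is a new indeterminate. A $\mathsf p$-family $(f)=(f_n)_{n\in\mathbb N}$ is a sequence of multivariate polynomials whose number of variables and degree are polynomially bounded in $n$. For polynomials over a field $K$, $f\le g$ (projection) means $f=g(\alpha_1,\dots,\alpha_M)$ where each $\alpha_i$ is a variable of $f$ or an element of $K$. For $f,g$ over $\mathbb F$, $f\trianglelefteq g$ if $f+\varepsilon h\le g$ (projection over $\mathbb F(\varepsilon)$) for some polynomial $h$ over $\mathbb F[\varepsilon]$; $(f)\trianglelefteq_{\mathsf p}(g)$ if there is a polynomially bounded $t:\mathbb N\to\mathbb N$ with $f_n\trianglelefteq g_{t(n)}$ for all $n$. $\mathrm{HC}_n=\sum_{\pi}\prod_{i=1}^n x_{i,\pi(i)}$, summing over permutations $\pi$ of $\{1,\dots,n\}$ that are $n$-cycles. $\mathrm{VNP}$ is the set of $\mathsf p$-families $(f)$ with $(f)\le_{\mathsf p}(\mathrm{HC})$ (where $(f)\le_{\mathsf p}(g)$ means $f_n\le g_{t(n)}$ for a polynomially bounded $t$), and $\mathrm{VNPC}(\trianglelefteq_{\mathsf p})=\{(f)\in\mathrm{VNP}:(\mathrm{HC})\trianglelefteq_{\mathsf p}(f)\}$. *)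

(* Defs.v *)
From HB Require Import structures.
From mathcomp Require Import all_boot all_order all_algebra all_fingroup.
From mathcomp Require Import mpoly.
Set Implicit Arguments. Unset Strict Implicit. Unset Printing Implicit Defensive.
Import GRing.Theory.
Local Open Scope ring_scope.

Definition var_ij (R : ringType) (n : nat) (i j : 'I_n) : {mpoly R[n * n]} :=
  'X_(mxvec_index i j).

Definition is_ncycle (n : nat) (s : 'S_n) : bool :=
  [forall x : 'I_n, #|porbit s x| == n].

Definition HC (R : ringType) (n : nat) : {mpoly R[n * n]} :=
  \sum_(s : 'S_n | is_ncycle s) \prod_(i < n) var_ij R i (s i).

Definition HC2 (R : ringType) (n : nat) : {mpoly R[n * n]} := HC R n ^+ 2.

Definition proj_le (K : ringType) (m M : nat) (f : {mpoly K[m]}) (g : {mpoly K[M]}) : Prop :=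
  exists a : M.-tuple {mpoly K[m]},
    (forall i : 'I_M, (exists j : 'I_m, tnth a i = 'X_j) \/ (exists c : K, tnth a i = c%:MP))
    /\ f = g \mPo a.

Notation Feps F := {fraction {poly F}}.
Definition eps (F : fieldType) : Feps F := tofrac 'X.
Definition embF (F : fieldType) (a : F) : Feps F := tofrac (a%:P).

Definition border_le (F : fieldType) (m M : nat) (f : {mpoly F[m]}) (g : {mpoly F[M]}) : Prop :=
  exists h : {mpoly {poly F}[m]},
    proj_le (map_mpoly (@embF F) f + eps F *: map_mpoly (@tofrac _) h)
            (map_mpoly (@embF F) g).

Definition poly_bounded (t : nat -> nat) : Prop :=
  exists c : nat, forall n : nat, (t n <= c * n ^ c + c)%N.

Definition border_le_p (F : fieldType) (vf vg : nat -> nat)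
    (f : forall n, {mpoly F[vf n]}) (g : forall n, {mpoly F[vg n]}) : Prop :=
  exists t : nat -> nat, poly_bounded t /\ forall n, border_le (f n) (g (t n)).

(* Main.v *)
Require Import Defs.
From HB Require Import structures.
From mathcomp Require Import all_boot all_order all_algebra all_fingroup.
From mathcomp Require Import mpoly.
From mathcomp Require Import zify.
Set Implicit Arguments. Unset Strict Implicit. Unset Printing Implicit Defensive.
Import GRing.Theory.
Local Open Scope ring_scope.

HB.instance Definition _ (F : fieldType) := GRing.RMorphism.copy (@embF F) ((@tofrac _) \o (@polyC F)).


Lemma HC1 (F : fieldType) : exists j, HC F 1 = 'X_j.
Proof.
exists (mxvec_index ord0 ord0).
rewrite /HC (big_pred1 (1%g : 'S_1)).
  by rewrite big_ord1 /var_ij perm1.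
move=> s /=; have -> : s = 1%g by apply/permP => i; rewrite !ord1.
rewrite eqxx; apply/forallP => x; rewrite eqn_leq; apply/andP; split.
  by apply: leq_trans (max_card _) _; rewrite card_ord.
by rewrite card_gt0; apply/set0Pn; exists x; exact: porbit_id.
Qed.


Lemma frac_dec (R : idomainType) (x : {fraction R}) :
  exists n d, d != 0 /\ x = tofrac n / tofrac d.
Proof.
elim/quotW: x => r; exists (\n_r), (\d_r); split; first exact: denom_ratioP.
have hd : tofrac (\d_r) != 0 :> {fraction R} by rewrite tofrac_eq0 denom_ratioP.
suff H : (\pi_({fraction R})%qT r) * tofrac (\d_r) = tofrac (\n_r).
  by rewrite -H mulrK // unitfE.
change (FracField.mul (\pi_({fraction R})%qT r) (tofrac (\d_r)) = tofrac (\n_r)).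
rewrite !piE.
apply/eqmodP; rewrite /= FracField.equivfE.
rewrite /FracField.mulf !numden_Ratio ?mulr1 ?mul1r //; last by rewrite oner_neq0.
all: try exact: denom_ratioP. all: try exact: oner_neq0. by rewrite mulrC.
Qed.

Section ML.
Variable F : fieldType.
Local Notation A := {poly F}.
Variable h : {poly A}.
Let q : {poly A} := 'X + ('X : A)%:P * h.
Local Notation phi := (horner_eval (0 : F)).

Lemma phiq : map_poly phi q = 'X.
Proof.
rewrite /q rmorphD /= rmorphM /= map_polyX map_polyC /= /horner_eval hornerX.
by rewrite polyC0 mul0r addr0.
Qed.

Lemma ML_aux k : forall (d : A) (R : {poly A}), (size d <= k)%N -> d != 0 ->
  (d ^+ 2)%:P * q != R ^+ 2.
Proof.
elim: k => [|k IH] d R hs hd.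
  by move: hs; rewrite leqn0 size_poly_eq0 (negbTE hd).
apply/negP => /eqP E.
have E' := congr1 (map_poly phi) E.
rewrite rmorphM /= phiq map_polyC /= (rmorphXn (map_poly phi)) (rmorphXn phi) in E'.
have {}E' : ((phi d)^+2)%:P * 'X = (map_poly phi R)^+2 := E'.
have [hd0|hd0] := eqVneq (phi d) 0.
-
  have : root d 0 by rewrite /root -[d.[0]]/(phi d) hd0.
  case/factor_theorem => d1 Hd1; rewrite subr0 in Hd1.
  have d1nz : d1 != 0 by apply: contraNneq hd => E0; rewrite Hd1 E0 mul0r.
  have sd1 : (size d1 <= k)%N by move: hs; rewrite Hd1 size_mulX.
  rewrite hd0 expr0n /= mul0r in E'.
  have mR : map_poly phi R = 0.
    by apply/eqP; move/esym/eqP: E'; rewrite expf_eq0 => /andP[].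
  have hR i : R`_i = ('X : A) * (R`_i %/ 'X).
    have hr : root R`_i 0.
      by rewrite /root -[(R`_i).[0]]/(phi R`_i) -coef_map mR coef0.
    rewrite mulrC divpK //.
    have -> : ('X : A) = 'X - 0%:P by rewrite subr0.
    by rewrite dvdp_XsubCl.
  pose R1 : {poly A} := \poly_(i < size R) (R`_i %/ 'X).
  have HR : R = ('X : A)%:P * R1.
    apply/polyP => i; rewrite coefCM coef_poly.
    case: ltnP => hi; first exact: hR.
    by rewrite nth_default // mulr0.
  have : (d1 ^+ 2)%:P * q = R1 ^+ 2.
    apply: (@mulfI _ ((('X : A) ^+ 2)%:P)).
      by rewrite polyC_eq0 expf_eq0 /= polyX_eq0.
    by rewrite mulrA -polyCM -exprMn [_ * d1]mulrC -Hd1 E HR exprMn (rmorphXn polyC).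
  by apply/eqP; apply: IH.
- (* parity *)
  have Rnz : map_poly phi R != 0.
    apply/negP => /eqP R0; move: E'; rewrite R0 expr0n /= => /eqP.
    by rewrite mulf_eq0 polyX_eq0 orbF polyC_eq0 expf_eq0 /= (negbTE hd0).
  have := congr1 (fun p : {poly F} => size p) E'.
  rewrite /= mul_polyC size_scale ?expf_neq0 // size_polyX expr2 size_mul //.
  move: (size (map_poly phi R)) => s; lia.
Qed.
End ML.

Lemma clear_den (R : idomainType) (P : {poly {fraction R}}) :
  exists (d : R) (Q : {poly R}), d != 0 /\ map_poly (@tofrac R) Q = (tofrac d)%:P * P.
Proof.
elim/poly_ind: P => [|P c [d [Q [hd HQ]]]].
  by exists 1, 0; rewrite oner_neq0 rmorph0 mulr0.
have [n [m [hm ->]]] := frac_dec c.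
exists (d * m), (m%:P * Q * 'X + (d * n)%:P); split; first by rewrite mulf_neq0.
have hm' : tofrac m != 0 :> {fraction R} by rewrite tofrac_eq0.
rewrite rmorphD rmorphM rmorphM /= map_polyX !map_polyC /= HQ !rmorphM /=.
rewrite mulrDr; congr (_ + _).
  by rewrite mulrA [(tofrac m)%:P * _]mulrC -!mulrA.
rewrite -!polyCM; apply: congr1; rewrite [tofrac n * _]mulrC mulrA mulrK; first reflexivity.
by rewrite unitfE.
Qed.

Lemma KL (F : fieldType) (h : {poly {poly F}}) (P : {poly {fraction {poly F}}}) :
  map_poly (@tofrac _) ('X + ('X : {poly F})%:P * h) != P ^+ 2.
Proof.
apply/negP => /eqP E.
have [d [Q [hd HQ]]] := clear_den P.
have := @ML_aux F h (size d) d Q (leqnn _) hd; apply/negP; rewrite negbK; apply/eqP.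
apply: (@map_inj_poly _ _ (@tofrac _)).
- by move=> x y /eqP; rewrite tofrac_eq => /eqP.
- exact: tofrac0.
rewrite rmorphM /= map_polyC E.
have H2 : map_poly (@tofrac {poly F}) (Q ^+ 2) = ((tofrac d)%:P * P) ^+ 2.
  by rewrite -HQ rmorphXn.
rewrite H2 exprMn; congr (_ * _); rewrite -(rmorphXn polyC); apply: congr1; exact: (rmorphXn (@tofrac _)).

Qed.

Lemma psi_map (A : idomainType) k (h : {mpoly A[k]}) :
  mmap (@polyC {fraction A}) (fun _ => 'X) (map_mpoly (@tofrac A) h)
  = map_poly (@tofrac A) (mmap (@polyC A) (fun _ => 'X) h).
Proof.
elim/mpolyind: h => [|c m p _ _ IH].
  by rewrite !raddf0.
rewrite (raddfD (map_mpoly (@tofrac A))).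
rewrite mmapD.
rewrite mmapD.
rewrite rmorphD.
congr (_ + _); last exact: IH.
rewrite /=.
rewrite map_mpolyZ map_mpolyX !mmapZ !mmapX rmorphM /= map_polyC /=.
congr (_ * _); rewrite /mmap1 rmorph_prod; apply: eq_bigr => i _.
by rewrite rmorphXn /= map_polyX.
Qed.

Lemma mmapXi (R : comRingType) k (i : 'I_k) :
  mmap (@polyC R) (fun _ => 'X) ('X_i) = 'X.
Proof. by rewrite mmapX mmap1U. Qed.

Theorem lemma2 (F : fieldType) :
  ~ @border_le_p F (fun n => (n * n)%N) (fun n => (n * n)%N) (HC F) (HC2 F).
Proof.
move=> [t [_ Ht]].
case: (Ht 1%N) => h [a [_ Ha]].
have [j Hj] := HC1 F.
pose G := map_mpoly (@embF F) (HC F (t 1%N)) \mPo a.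
have HR : map_mpoly (@embF F) (HC2 F (t 1%N)) \mPo a = G ^+ 2.
  by rewrite /HC2 rmorphXn /= rmorphXn.
rewrite HR Hj map_mpolyX in Ha.
pose psi := mmap (@polyC {fraction {poly F}}) (fun _ : 'I_(1 * 1) => 'X).
have := congr1 psi Ha.
rewrite /psi raddfD /= mmapXi mmapZ psi_map (rmorphXn (mmap _ _)) /=.
move=> E.
apply/negP: (KL (mmap (@polyC _) (fun _ => 'X) h) (psi G)); rewrite negbK; apply/eqP.
rewrite -E rmorphD /= map_polyX rmorphM /= map_polyC /=.
reflexivity.
Qed.
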